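(* Let $\mathcal F=(f_t)$ be a continuous flow on a compact metric space $X$, $\varphi\colon X\to\mathbb{R}$ continuous, and $\lambda\colon X\to[0,\infty)$ bounded and lower semicontinuous. For $\eta>0$ let $B(\eta)=\{(x,t)\in X\times[0,\infty): \frac1t\int_0^t\lambda(f_sx)\,ds\le\eta\}$. Then for every $\eta>0$ and every $\varepsilon>0$, $P([B(\eta)],\varphi)\le P(B(\eta+\varepsilon),\varphi)$.
   Context: For $\mathcal C\subset X\times[0,\infty)$, $[\mathcal C]=\{(x,n)\in X\times\mathbb N: (f_{-s}x,n+s+t)\in\mathcal C\text{ for some }s,t\in[0,1]\}$. For a collection $\mathcal C$ of orbit segments, with $\mathcal C_t=\{x:(x,t)\in\mathcal C\}$: $\Lambda_t(\mathcal C,\varphi,\varepsilon)=\sup\{\sum_{x\in E}e^{\int_0^t\varphi(f_sx)ds}: E\subset\mathcal C_t\ (t,\varepsilon)\text{-separated}\}$, $P(\mathcal C,\varphi,\varepsilon)=\limsup_{t\to\infty}\frac1t\log\Lambda_t(\mathcal C,\varphi,\varepsilon)$, $P(\mathcal C,\varphi)=\lim_{\varepsilon\to0}P(\mathcal C,\varphi,\varepsilon)$. *)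

(* Defs.v *)
From HB Require Import structures.
From mathcomp Require Import all_boot all_order all_algebra finmap.
From mathcomp Require Import all_classical all_reals all_analysis.
Set Implicit Arguments. Unset Strict Implicit. Unset Printing Implicit Defensive.
Import Order.TTheory GRing.Theory Num.Theory.
Import numFieldNormedType.Exports.
Local Open Scope classical_set_scope.
Local Open Scope ring_scope.

Section Flow.
Context {R : realType} {X : metricType R}.

Definition is_continuous_flow (f : R -> X -> X) : Prop :=
  (forall x, f 0 x = x) /\
  (forall s t x, f (s + t) x = f s (f t x)) /\
  continuous (fun p : R * X => f p.1 p.2).

Definition bowen_dist (f : R -> X -> X) (t : R) (x y : X) : R :=
  sup [set mdist (f s x) (f s y) | s in `[0, t]].

Definition separated (f : R -> X -> X) (t eps : R) (E : {fset X}) : Prop :=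
  forall x y, x \in E -> y \in E -> x != y -> eps < bowen_dist f t x y.

Definition slice (C : set (X * R)) (t : R) : set X := [set x | C (x, t)].

Definition birkhoff_int (f : R -> X -> X) (phi : X -> R) (t : R) (x : X) : R :=
  (\int[@lebesgue_measure R]_(s in `[0, t]) phi (f s x))%R.

Definition Lambda (f : R -> X -> X) (C : set (X * R)) (phi : X -> R)
    (eps t : R) : \bar R :=
  ereal_sup [set (\sum_(x <- E) expR (birkhoff_int f phi t x))%:E
            | E in [set E : {fset X} |
                    (forall x, x \in E -> slice C t x) /\ separated f t eps E]].

Definition pressure_eps (f : R -> X -> X) (C : set (X * R)) (phi : X -> R)
    (eps : R) : \bar R :=
  limf_esup (fun t : R => ((t^-1)%:E * lne (Lambda f C phi eps t))%E)
            (@pinfty_nbhs R).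

Definition pressure (f : R -> X -> X) (C : set (X * R)) (phi : X -> R) : \bar R :=
  lim (pressure_eps f C phi e @[e --> 0^'+]).

Definition discretize (f : R -> X -> X) (C : set (X * R)) : set (X * R) :=
  [set p | exists n : nat, p.2 = n%:R /\
     exists s t : R, (0 <= s <= 1) /\ (0 <= t <= 1) /\
       C (f (- s) p.1, n%:R + s + t)].

Definition Bset (f : R -> X -> X) (lam : X -> R) (eta : R) : set (X * R) :=
  [set p | 0 <= p.2 /\ p.2^-1 * birkhoff_int f lam p.2 p.1 <= eta].

End Flow.

(* Main.v *)
Require Import Defs.
From HB Require Import structures.
From mathcomp Require Import all_boot all_order all_algebra finmap.
From mathcomp Require Import all_classical all_reals all_analysis.
From mathcomp Require Import measurable_realfun.
From mathcomp Require Import lra.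
Import Order.TTheory GRing.Theory Num.Theory.
Import numFieldNormedType.Exports.
Local Open Scope classical_set_scope.
Local Open Scope ring_scope.
Section Aux.
Context {R : realType} {X : metricType R} (f : R -> X -> X).

Lemma Lambda_ge0 C phi e t : (0 <= Lambda f C phi e t)%E.
Proof.
apply: le_ereal_sup_tmp; exists 0%E => //.
exists fset0; last by rewrite big_nil.
by split=> [x|x y]; rewrite inE.
Qed.

Lemma Lambda_le C1 C2 phi e1 e2 t : e2 <= e1 ->
  slice C1 t `<=` slice C2 t ->
  (Lambda f C1 phi e1 t <= Lambda f C2 phi e2 t)%E.
Proof.
move=> e21 sub; apply: ereal_sup_le => _ [E [HE Hs] <-].
exists E => //; split=> [x /HE/sub //|x y xE yE xy].
exact: le_lt_trans e21 (Hs x y xE yE xy).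
Qed.

Lemma limf_esup_le (g h : R -> \bar R) :
  (\forall t \near +oo, (g t <= h t)%E) ->
  (limf_esup g (@pinfty_nbhs R) <= limf_esup h (@pinfty_nbhs R))%E.
Proof.
move=> ev; pose V0 := [set t | (g t <= h t)%E].
have FV0 : @pinfty_nbhs R V0 by exact: ev.
have gh : forall t, V0 t -> (g t <= h t)%E by [].
rewrite !limf_esupE.
apply: le_ereal_inf_tmp => _ [V FV <-].
apply: (@le_trans _ _ (ereal_sup (g @` (V `&` V0)))).
  apply: ereal_inf_lbound; exists (V `&` V0) => //.
  exact: filterI.
apply: ge_ereal_sup => _ [t [Vt V0t] <-].
apply: (le_trans (gh t V0t)); apply: ereal_sup_ubound; by exists t.
Qed.

Lemma pressure_eps_le C1 C2 phi e1 e2 : e2 <= e1 ->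
  (\forall t \near +oo, slice C1 t `<=` slice C2 t) ->
  (pressure_eps f C1 phi e1 <= pressure_eps f C2 phi e2)%E.
Proof.
move=> e21 ev; apply: limf_esup_le.
near=> t.
have t0 : 0 < t by near: t; exact: nbhs_pinfty_gt.
apply: lee_wpmul2l; first by rewrite lee_fin invr_ge0 ltW.
rewrite lee_lne; first by apply: Lambda_le => //; near: t; exact: ev.
- by rewrite in_itv /= Lambda_ge0 leey.
- by rewrite in_itv /= Lambda_ge0 leey.
Unshelve. all: by end_near. Qed.

Lemma pressure_sup C phi :
  pressure f C phi = ereal_sup [set pressure_eps f C phi e | e in `]0, +oo[].
Proof.
rewrite /pressure; apply: cvg_lim => //.
have := @nonincreasing_at_right_cvge R (pressure_eps f C phi) 0 (BInfty _ false).
apply => //.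
move=> a b _ _ ab; apply: pressure_eps_le => //.
by near=> t.
Unshelve. all: by end_near. Qed.

End Aux.
Section Shift.
Context {R : realType}.
Local Notation mu := (@lebesgue_measure R).

Lemma shift_meas (s : R) : measurable_fun [set: R] (fun u : R => u + s).
Proof. by apply: measurable_realfun.measurable_funD => //; exact: measurable_cst. Qed.

Lemma pushforward_shift (s : R) (A : set R) : measurable A ->
  pushforward mu ((fun u : R => u + s) : _ -> measurableTypeR R) A = mu A.
Proof.
move=> mA.
apply/esym/lebesgue_measure_unique => //=; first exact: shift_meas.
move=> _ _ [[a b]] _ <-.
rewrite /pushforward.
have -> : (fun u : R => u + s) @^-1` `]a, b] = `](a - s), (b - s)]%classic.
  apply/seteqP; split=> x /=; rewrite !in_itv /= => /andP[h1 h2];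
  apply/andP; split.
  - by rewrite ltrBlDr.
  - by rewrite lerBrDr.
  - by rewrite -ltrBlDr.
  - by rewrite -lerBrDr.
rewrite !lebesgue_measure_itv /= !lte_fin ltrD2r.
case: ifP => // _; rewrite -!EFinD; by rewrite opprB addrA subrK.
Qed.

Lemma integral_shift (g : R -> \bar R) (a b s : R) :
  measurable_fun [set: R] g -> (forall x, (0 <= g x)%E) ->
  (\int[mu]_(u in `[a, b]) g (u + s)%R = \int[mu]_(v in `[(a + s)%R, (b + s)%R]) g v)%E.
Proof.
move=> mg g0.
have mS := shift_meas s.
transitivity (\int[pushforward mu ((fun u : R => (u + s)%R) : _ -> measurableTypeR R)]_(v in `[(a + s)%R, (b + s)%R]) g v)%E; last first.
  by apply: eq_measure_integral => A mA _; exact: pushforward_shift.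
rewrite ge0_integral_pushforward //; last first.
  by apply: measurable_funS mg.
congr (integral _ _ _).
apply/seteqP; split=> x /=; rewrite !in_itv /= => /andP[h1 h2];
  apply/andP; split.
- by rewrite -lerBlDr addrK.
- by rewrite -lerBrDr addrK.
- by rewrite -(lerD2r s).
- by rewrite -(lerD2r s).
Qed.

End Shift.
Section FlowPart.
Context {R : realType} {X : metricType R} (f : R -> X -> X) (lam : X -> R).
Local Notation mu := (@lebesgue_measure R).
Hypothesis hflow : is_continuous_flow f.
Hypothesis lam0 : forall x, 0 <= lam x.
Hypothesis lamM : exists M : R, forall x, lam x <= M.
Hypothesis lsc : lower_semicontinuous (fun x => (lam x)%:E).

Definition J (y : X) (a b : R) : \bar R :=
  (\int[mu]_(u in `[a, b]) (lam (f u y))%:E)%E.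

Lemma cont_orbit y : continuous (fun u : R => f u y).
Proof.
case: hflow => _ [_ hc] u.
have h1 : ((v, y) @[v --> u] --> (u, y))%classic.
  exact: (cvg_pair cvg_id (cvg_cst y)).
exact: (cvg_comp _ _ h1 (hc (u, y))).
Qed.

Lemma meas_orbit y : measurable_fun [set: R] (fun u : R => (lam (f u y))%:E).
Proof.
apply: measurable_realfun.lower_semicontinuous_measurable.
apply/lower_semicontinuousP => a.
have -> : [set u : R | (a%:E < (lam (f u y))%:E)%E] =
  (fun u => f u y) @^-1` [set x | (a%:E < (lam x)%:E)%E] by [].
apply: open_comp; first by move=> u _; exact: cont_orbit.
by move/lower_semicontinuousP : lsc; apply.
Qed.

Lemma J_ge0 y a b : (0 <= J y a b)%E.
Proof. by apply: integral_ge0 => u _; rewrite lee_fin. Qed.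

Lemma J_fin y a b : J y a b \is a fin_num.
Proof.
case: lamM => M hM.
rewrite ge0_fin_numE ?J_ge0 //.
apply: (le_lt_trans (y := (\int[mu]_(u in `[a, b]) (cst M%:E) u)%E)).
  apply: ge0_le_integral => //.
  - by move=> u _; rewrite lee_fin.
  - exact: measurable_funS (meas_orbit y).
  - by move=> u _; rewrite lee_fin.
rewrite integral_cst //.
apply: lte_mul_pinfty => //.
  by rewrite lee_fin (le_trans (lam0 y) (hM y)).
exact: (compact_finite_measure (@segment_compact R a b)).
Qed.

Lemma J_sub y a b c d : c <= a -> b <= d ->
  (J y a b <= J y c d)%E.
Proof.
move=> ca bd; apply: ge0_subset_integral => //.
- exact: measurable_funS (meas_orbit y).
- by move=> u _; rewrite lee_fin.
- move=> u /=; rewrite !in_itv /= => /andP[h1 h2]; apply/andP; split.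
  + exact: le_trans ca h1.
  + exact: le_trans h2 bd.
Qed.

Lemma J_shift y s n : J (f s y) 0 n = J y s (s + n).
Proof.
case: hflow => _ [hadd _].
rewrite /J.
under eq_integral do rewrite -hadd.
rewrite (@integral_shift R (fun v => (lam (f v y))%:E) 0 n s).
- by rewrite add0r addrC.
- exact: meas_orbit.
- by move=> u; rewrite lee_fin.
Qed.

End FlowPart.
Section Main.
Context {R : realType} {X : metricType R} (f : R -> X -> X) (lam : X -> R).
Hypothesis hflow : is_continuous_flow f.
Hypothesis lam0 : forall x, 0 <= lam x.
Hypothesis lamM : exists M : R, forall x, lam x <= M.
Hypothesis lsc : lower_semicontinuous (fun x => (lam x)%:E).

Lemma slice_incl eta eps : 0 < eta -> 0 < eps ->
  \forall t \near +oo,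
    slice (discretize f (Bset f lam eta)) t `<=` slice (Bset f lam (eta + eps)) t.
Proof.
move=> eta0 eps0.
have [h0 [hadd _]] := hflow.
near=> t.
move=> x /= [n [tn [s [t' [/andP[s0 s1] [/andP[t0 t1] HB]]]]]].
have tpos : 0 < t by near: t; exact: nbhs_pinfty_gt.
have tbig : 2 * eta / eps <= t by near: t; apply: nbhs_pinfty_ge; rewrite num_real.
simpl in tn, HB; rewrite -tn in HB.
have k2 : 2 * eta <= eps * t.
  by move: tbig; rewrite ler_pdivrMr // => h; lra.
set y := f (- s) x in HB.
have xy : x = f s y by rewrite /y -hadd addrN h0.
case: HB => T0 HT; simpl in T0, HT.
rewrite /slice /Bset /=; split; first exact: ltW.
have hT : 0 < t + s + t' by lra.
have -> : birkhoff_int f lam t x = fine (J f lam x 0 t) by [].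
have HT' : fine (J f lam y 0 (t + s + t')) <= eta * (t + s + t').
  by move: HT; rewrite ler_pdivrMl // [_ * eta]mulrC.
rewrite xy J_shift //.
have I1 : fine (J f lam y s (s + t)) <= fine (J f lam y 0 (t + s + t')).
  apply: fine_le; [exact: J_fin|exact: J_fin|].
  apply: J_sub => //.
  lra.
rewrite ler_pdivrMl //.
have e2 : eta * (s + t') <= eta * 2 by nra.
nra.
Unshelve. all: by end_near. Qed.
End Main.

Theorem lemma3p5 (R : realType) (X : metricType R) (f : R -> X -> X)
    (phi lam : X -> R) :
  compact [set: X] ->
  is_continuous_flow f ->
  continuous phi ->
  (forall x, 0 <= lam x) ->
  (exists M : R, forall x, lam x <= M) ->
  lower_semicontinuous (fun x => (lam x)%:E) ->
  forall eta eps : R, 0 < eta -> 0 < eps ->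
    (pressure f (discretize f (Bset f lam eta)) phi
     <= pressure f (Bset f lam (eta + eps)) phi)%E.
Proof.
move=> _ hflow _ lam0 lamM lsc eta eps eta0 eps0.
rewrite !pressure_sup.
apply: ge_ereal_sup => _ [e e0 <-].
apply: le_ereal_sup_tmp.
exists (pressure_eps f (Bset f lam (eta + eps)) phi e); first by exists e.
apply: pressure_eps_le => //.
exact: slice_incl.
Qed.
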